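(* Let $G=(V,E,w)$, $s$, $\tau$ (with $|\tau|\ge 2$) and a budget $b\ge 0$ be as in the context, and suppose that at least one feasible subgraph exists. Then among the maximizers of $\textsc{CD}_{\tau,s}(S)$ over all feasible subgraphs $S\subseteq G$, there is at least one that is a directed acyclic graph.
   Context: Let $G=(V,E,w)$ be a finite directed graph with non-negative edge weights $w:E\to\mathbb{R}_{\ge 0}$. A path from $u$ to $v$ in a subgraph $S\subseteq G$ is a sequence $u=v_0\to v_1\to\cdots\to v_k=v$ ($k\ge 0$) with each $v_i\to v_{i+1}$ an edge of $S$; for $i\le j$, $w_P(v_i,v_j)=\sum_{m=i}^{j-1} w(v_m\to v_{m+1})$. A vertex $y$ is reachable from $x$ in $S$ if there is a path from $x$ to $y$ in $S$ (a vertex is reachable from itself). Fix a start vertex $s\in V$ and a finite target set $\tau\subseteq V\setminus\{s\}$ with $|\tau|\ge 2$. The cost of a subgraph $S$ is $w(S)=\sum_{e\in E(S)} w(e)$. For a subgraph $S$ containing $s$ and $\tau$ in which every target is reachable from $s$: for a path $P=v_0\to\cdots\to v_k$ in $S$ with $v_0=s$, $v_k=t\in\tau$, let $\ell$ be the largest index such that some target in $\tau\setminus\{t\}$ is reachable from $v_\ell$ in $S$; the last deceptive point is $l(P,t)=v_\ell$. The unique distance of $t\in\tau$ is $\textsc{U}_S(t)=\min\{w_P(l(P,t),t): P \text{ a path in } S \text{ from } s \text{ to } t\}$, and the counterdeceptiveness of $S$ is $\textsc{CD}_{\tau,s}(S)=\min_{t\in\tau}\textsc{U}_S(t)$. Given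 a budget $b\ge 0$, a subgraph $S\subseteq G$ is feasible if $s\in V(S)$, $\tau\subseteq V(S)$, every target is reachable from $s$ in $S$, and $w(S)\le b$. A maximizer is a feasible $S$ maximizing $\textsc{CD}_{\tau,s}(S)$ among feasible subgraphs. *)

(* Defs.v *)
From HB Require Import structures.
From mathcomp Require Import all_boot all_order all_algebra.
From mathcomp Require Import boolp classical_sets reals.
Set Implicit Arguments. Unset Strict Implicit. Unset Printing Implicit Defensive.
Import Order.TTheory GRing.Theory Num.Theory.
Local Open Scope ring_scope.
Local Open Scope classical_set_scope.

(* A directed graph G = (V, E, w): V a finite type, E : {set V * V} the edge
   relation, w : V * V -> R the weight (nonnegativity on E is a hypothesis). *)
Definition subgraph (V : finType) := ({set V} * {set V * V})%type.

Section Defs.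
Variables (R : realType) (V : finType).
Implicit Types (S : subgraph V).

Definition is_subgraph (E : {set V * V}) S :=
  S.2 \subset E /\ forall e, e \in S.2 -> e.1 \in S.1 /\ e.2 \in S.1.

Definition edgeS S : rel V := fun x y => (x, y) \in S.2.

Definition walk S (x : V) (p : seq V) : Prop := x \in S.1 /\ path (edgeS S) x p.

Definition reachable S (x y : V) : Prop :=
  exists p : seq V, walk S x p /\ last x p = y.

Definition cost (w : V * V -> R) S : R := \sum_(e in S.2) w e.

(* w_P(v_i, v_k) for the path P = x :: p, k = size p *)
Definition suffix_weight (w : V * V -> R) (x : V) (p : seq V) (i : nat) : R :=
  \sum_(i <= m < size p) w (nth x (x :: p) m, nth x (x :: p) m.+1).

Definition deceptive (tau : {set V}) S (t v : V) : Prop :=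
  exists t', [/\ t' \in tau, t' != t & reachable S v t'].

Definition is_ldp_index (tau : {set V}) S (t x : V) (p : seq V) (i : nat) : Prop :=
  [/\ (i <= size p)%N, deceptive tau S t (nth x (x :: p) i)
    & forall j, (i < j <= size p)%N -> ~ deceptive tau S t (nth x (x :: p) j)].

(* unique distance U_S(t): minimum (taken as infimum) over paths P from s to t
   of w_P(l(P,t), t) *)
Definition unique_dist (w : V * V -> R) (tau : {set V}) (s : V) S (t : V) : R :=
  inf [set u : R | exists p : seq V, exists i : nat,
         [/\ walk S s p, last s p = t, is_ldp_index tau S t s p i
           & u = suffix_weight w s p i]].

Definition CD (w : V * V -> R) (tau : {set V}) (s : V) S : R :=
  inf [set u : R | exists2 t, t \in tau & u = unique_dist w tau s S t].

Definition feasible (E : {set V * V}) (w : V * V -> R) (tau : {set V}) (s : V)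
    (b : R) S : Prop :=
  [/\ is_subgraph E S, s \in S.1, tau \subset S.1,
      (forall t, t \in tau -> reachable S s t) & cost w S <= b].

Definition acyclic S : Prop :=
  forall (x : V) (p : seq V), walk S x p -> p != [::] -> last x p != x.

End Defs.

(* Main.v *)
Require Import Defs.
From HB Require Import structures.
From mathcomp Require Import all_boot all_order all_algebra.
From mathcomp Require Import boolp classical_sets reals.
Import Order.TTheory GRing.Theory Num.Theory.
Local Open Scope ring_scope.

Section Aux.
Set Implicit Arguments. Unset Strict Implicit.
Variables (R : realType) (V : finType).
Implicit Types (S : subgraph V).

Lemma max_index (P : nat -> Prop) n i' : (i' <= n)%N -> P i' ->
  exists i, [/\ (i' <= i <= n)%N, P i & forall j, (i < j <= n)%N -> ~ P j].
Proof.
elim: n i' => [|n IH] i'.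
  rewrite leqn0 => /eqP -> H0; exists 0%N; split => // j /andP[a b].
  by move: (leq_trans a b).
move=> hi Pi.
case: (EM (P n.+1)) => Pn.
  exists n.+1; split => //; first by rewrite hi leqnn.
  by move=> j /andP[a b]; move: (leq_trans a b); rewrite ltnn.
move: hi; rewrite leq_eqVlt => /orP[/eqP E|hi].
  by rewrite E in Pi.
have [i [/andP[h1 h2] h3 h4]] := IH i' hi Pi.
exists i; split => //; first by rewrite h1 (leq_trans h2).
move=> j /andP[a b]; move: b; rewrite leq_eqVlt => /orP[/eqP ->//|b].
by apply: h4; rewrite a.
Qed.

Lemma walk_sub S S' x p : S'.1 \subset S.1 -> S'.2 \subset S.2 ->
  walk S' x p -> walk S x p.
Proof.
move=> s1 s2 [hx hp]; split; first exact: (fintype.subsetP s1 x hx).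
apply: path.sub_path hp => a b; rewrite /edgeS; exact: (fintype.subsetP s2).
Qed.

Lemma reach_sub S S' x y : S'.1 \subset S.1 -> S'.2 \subset S.2 ->
  reachable S' x y -> reachable S x y.
Proof. by move=> s1 s2 [p [hw hl]]; exists p; split => //; apply: walk_sub hw. Qed.

Lemma walk_edge S x p m : walk S x p -> (m < size p)%N ->
  (nth x (x :: p) m, nth x (x :: p) m.+1) \in S.2.
Proof. by move=> [_ /(pathP x) H] hm; exact: H. Qed.

Variables (E : {set V * V}) (w : V * V -> R).
Hypothesis hw : forall e, e \in E -> 0 <= w e.

Lemma sw_ge0 S x p i : is_subgraph E S -> walk S x p -> 0 <= suffix_weight w x p i.
Proof.
move=> [sE _] hW; rewrite /suffix_weight big_nat_cond.
apply: sumr_ge0 => m /andP[/andP[_ hm] _].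
by apply: hw; apply: (fintype.subsetP sE); apply: walk_edge hW hm.
Qed.

Lemma sw_mono S x p i j : is_subgraph E S -> walk S x p -> (j <= i)%N ->
  suffix_weight w x p i <= suffix_weight w x p j.
Proof.
move=> [sE _] hW hij; rewrite /suffix_weight.
have [hi|hi] := leqP i (size p).
  rewrite (big_cat_nat hij hi) /= lerDr big_nat_cond.
  apply: sumr_ge0 => m /andP[/andP[_ hm] _].
  by apply: hw; apply: (fintype.subsetP sE); apply: walk_edge hW (leq_trans hm hi).
rewrite big_geq ?(ltnW hi) //.
rewrite big_nat_cond; apply: sumr_ge0 => m /andP[/andP[_ hm] _].
by apply: hw; apply: (fintype.subsetP sE); apply: walk_edge hW hm.
Qed.

Variables (tau : {set V}) (s : V) (b : R).
Hypothesis htau : (2 <= #|tau|)%N.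

Definition Uset S t := ([set u : R | exists p : seq V, exists i : nat,
         [/\ walk S s p, last s p = t, is_ldp_index tau S t s p i
           & u = suffix_weight w s p i]])%classic.

Lemma other_target t : t \in tau -> exists t', t' \in tau /\ t' != t.
Proof.
move=> ht.
have : (0 < #|tau :\ t|)%N.
  by move: htau; rewrite (cardsD1 t) ht add1n ltnS.
case/card_gt0P => t' /setD1P[h1 h2]; by exists t'.
Qed.

Lemma Uset_nonempty S t : feasible E w tau s b S -> t \in tau ->
  (Uset S t !=set0)%classic.
Proof.
move=> [_ _ _ hr _] ht.
have [p [hW hl]] := hr t ht.
have [t' [ht' hne]] := other_target ht.
have D0 : deceptive tau S t (nth s (s :: p) 0).
  by exists t'; split => //; apply: hr.
have [i [/andP[_ hin] hD hmax]] := @max_index (fun j => deceptive tau S t (nth s (s :: p) j))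
  (size p) 0 (leq0n (size p)) D0.
exists (suffix_weight w s p i); rewrite /Uset /mkset. by exists p, i; split => //; split.
Qed.

Lemma Uset_lb S t : is_subgraph E S -> lbound (Uset S t) 0.
Proof. by move=> hS u [p [i [hW _ _ ->]]]; apply: sw_ge0 hW. Qed.

Lemma U_ge0 S t : feasible E w tau s b S -> t \in tau -> 0 <= unique_dist w tau s S t.
Proof.
move=> hf ht; apply: lb_le_inf; first exact: Uset_nonempty hf ht.
by case: hf => *; apply: Uset_lb.
Qed.

Lemma U_mono S S' t : feasible E w tau s b S -> feasible E w tau s b S' ->
  S'.1 \subset S.1 -> S'.2 \subset S.2 -> t \in tau ->
  unique_dist w tau s S t <= unique_dist w tau s S' t.
Proof.
move=> hf hf' s1 s2 ht.
apply: lb_le_inf; first exact: Uset_nonempty hf' ht.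
move=> u [p [i' [hW hl [hi' hD' _] ->]]].
have hWS := walk_sub s1 s2 hW.
have hD : deceptive tau S t (nth s (s :: p) i').
  by case: hD' => t0 [a b' c]; exists t0; split => //; apply: reach_sub c.
have [i [/andP[hii' hi] hDi hmax]] :=
  @max_index (fun j => deceptive tau S t (nth s (s :: p) j)) _ _ hi' hD.
have hsub : is_subgraph E S by case: hf.
apply: (@le_trans _ _ (suffix_weight w s p i)).
  apply: ge_inf; first by exists 0; apply: Uset_lb.
  by exists p, i; split => //; split.
exact: sw_mono hsub hWS hii'.
Qed.

Lemma CD_mono S S' : feasible E w tau s b S -> feasible E w tau s b S' ->
  S'.1 \subset S.1 -> S'.2 \subset S.2 -> CD w tau s S <= CD w tau s S'.
Proof.
move=> hf hf' s1 s2.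
have [t0 ht0] : exists t, t \in tau.
  by apply/card_gt0P; apply: leq_trans htau.
apply: lb_le_inf.
  by exists (unique_dist w tau s S' t0); exists t0.
move=> u [t ht ->].
apply: (@le_trans _ _ (unique_dist w tau s S t)); last exact: U_mono.
apply: ge_inf; last by exists t.
by exists 0 => v [t1 ht1 ->]; apply: U_ge0.
Qed.

End Aux.

Section Prune.
Set Implicit Arguments. Unset Strict Implicit.
Variables (V : finType) (s : V).
Implicit Types (S : subgraph V).

Lemma dist_ex S : exists d : V -> nat, forall v, reachable S s v ->
  (exists p, [/\ walk S s p, last s p = v & size p = d v]) /\
  (forall p, walk S s p -> last s p = v -> (d v <= size p)%N).
Proof.
have H : forall v, exists n : nat, reachable S s v ->
  (exists p, [/\ walk S s p, last s p = v & size p = n]) /\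
  (forall p, walk S s p -> last s p = v -> (n <= size p)%N).
  move=> v; case: (EM (reachable S s v)) => hr; last by exists 0%N.
  pose P := fun n => `[< exists p, [/\ walk S s p, last s p = v & size p = n] >].
  have exP : exists n, P n.
    case: hr => p [hW hl]; exists (size p); apply/asboolP; by exists p.
  case: (ex_minnP exP) => m /asboolP Pm hmin.
  exists m => _; split => // p hW hl; apply: hmin; apply/asboolP; by exists p.
have [d hd] := choice H.
by exists d.
Qed.

Lemma prune S : s \in S.1 -> exists S' : subgraph V,
  [/\ S'.1 = S.1, S'.2 \subset S.2,
      (forall v, reachable S s v -> reachable S' s v) & acyclic S'].
Proof.
move=> hs.
have [d hd] := dist_ex S.
pose S' : subgraph V := (S.1, [set e in S.2 | (d e.1 < d e.2)%N]).
exists S'; split => //.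
- by apply/fintype.subsetP => e; rewrite inE => /andP[].
- suff K : forall n v, d v = n -> reachable S s v -> reachable S' s v.
    by move=> v; apply: K.
  elim=> [|n IH] v hdv hr.
    have [[p [hW hl hsz]] _] := hd v hr.
    move: hsz; rewrite hdv => /size0nil Ep; subst p.
    by exists [::]; split => //; split.
  have [[p [hW hl hsz]] hmin] := hd v hr.
  case/lastP: p hW hl hsz => [|q y] hW hl hsz.
    by rewrite hdv in hsz.
  rewrite last_rcons in hl; subst y.
  case: hW => hs0; rewrite rcons_path => /andP[hq he].
  set u := last s q in he.
  have hWq : walk S s q by [].
  have hru : reachable S s u by exists q.
  have [[r [hWr hlr hszr]] hminu] := hd u hru.
  have hdu : d u = n.
    apply/eqP; rewrite eqn_leq; apply/andP; split.
      have hq' : size q = n by move: hsz; rewrite size_rcons hdv => -[].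
      by rewrite -hq'; apply: hminu.
    have : walk S s (rcons r v).
      split => //; rewrite rcons_path hWr.2 /= hlr //.
    move=> /(hmin _) ; rewrite last_rcons size_rcons hszr => /(_ erefl).
    by rewrite hdv ltnS.
  have [r' [hWr' hlr']] := IH u hdu hru.
  exists (rcons r' v); split; last by rewrite last_rcons.
  split; first by case: hWr'.
  rewrite rcons_path; case: hWr' => _ -> /=; rewrite hlr' /edgeS /= inE.
  by rewrite /= hdu hdv ltnSn andbT; exact: he.
- move=> x p [_ hp] hne.
  suff K : forall x p, path (edgeS S') x p -> (d x <= d (last x p))%N.
    case: p hp hne => [//|y q] /= /andP[hxy hq] _.
    move: hxy; rewrite /edgeS /= inE => /andP[_ hlt].
    apply/eqP => Ex; have := K _ _ hq; rewrite Ex.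
    by move=> h; move: (leq_trans hlt h); rewrite ltnn.
  move=> y0 q0; elim: q0 y0 => [|z q IHq] y //= /andP[hyz hq].
  move: hyz; rewrite /edgeS /= inE => /andP[_ hlt].
  exact: leq_trans (ltnW hlt) (IHq _ hq).
Qed.

End Prune.

Theorem lemma1 (R : realType) (V : finType) (E : {set V * V}) (w : V * V -> R)
    (s : V) (tau : {set V}) (b : R)
    (hw : forall e, e \in E -> 0 <= w e)
    (hs : s \notin tau) (htau : (2 <= #|tau|)%N) (hb : 0 <= b)
    (hfeas : exists S : subgraph V, feasible E w tau s b S) :
  exists S : subgraph V,
    [/\ feasible E w tau s b S,
        (forall S' : subgraph V, feasible E w tau s b S' ->
           CD w tau s S' <= CD w tau s S)
      & acyclic S].
Proof.
have [S0 hS0] := hfeas.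
pose P := fun S : subgraph V => `[< feasible E w tau s b S >].
have P0 : P S0 by apply/asboolP.
case: (arg_maxP (CD w tau s) P0) => M /asboolP hM hmax.
have hM' := hM; case: hM' => [[sE sV] hsM htM hrM hcM].
have [M' [e1 e2 hreach hac]] := prune hsM.
have hfM' : feasible E w tau s b M'.
  split.
  - split; first exact: fintype.subset_trans e2 sE.
    by move=> e he; rewrite e1; apply: sV; apply: (fintype.subsetP e2).
  - by rewrite e1.
  - by rewrite e1.
  - by move=> t ht; apply: hreach; apply: hrM.
  - apply: le_trans hcM; rewrite /cost (big_setID M'.2 (A := M.2)) /=.
    have -> : M.2 :&: M'.2 = M'.2 by apply/finset.setIidPr.
    rewrite lerDl; apply: sumr_ge0 => e /finset.setDP[he _].
    by apply: hw; apply: (fintype.subsetP sE).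
exists M'; split => // S' hS'.
apply: le_trans (hmax S' _) _; first by apply/asboolP.
have hs1 : M'.1 \subset M.1 by rewrite e1.
exact: (@CD_mono R V E w hw tau s b htau M M' hM hfM' hs1 e2).
Qed.
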